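(* $\mathfrak{s}(2^\omega)$ is uncountable.
   Context: For infinite sets $U, A$, say $U$ splits $A$ if both $A\cap U$ and $A\setminus U$ are infinite. For a topological space $X$, $\mathfrak{s}(X)$ is the smallest cardinality of a family $\mathcal{U}$ of open subsets of $X$ such that every infinite $A\subseteq X$ is split by some $U\in\mathcal{U}$. $2^\omega$ is the Cantor space. *)

(* Defs.v *)
From HB Require Import structures.
From mathcomp Require Import all_boot all_order all_algebra.
From mathcomp Require Import all_classical all_reals all_analysis.
Set Implicit Arguments. Unset Strict Implicit. Unset Printing Implicit Defensive.
Local Open Scope classical_set_scope.

Definition splits {T : Type} (U A : set T) : Prop :=
  infinite_set (A `&` U) /\ infinite_set (A `\` U).

Definition splitting_open_family (X : topologicalType) (F : set (set X)) : Prop :=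
  (forall U, F U -> open U) /\
  (forall A : set X, infinite_set A -> exists2 U, F U & splits U A).

(* Main.v *)
Require Import Defs.
From mathcomp Require Import all_boot all_order all_algebra.
From mathcomp Require Import all_classical all_reals all_analysis.
Local Open Scope classical_set_scope.

Lemma inj_infinite (T : pointedType) (A : set T) (f : nat -> T) :
  (forall n, A (f n)) -> injective f -> infinite_set A.
Proof.
move=> Af fi; apply/infiniteP; apply/pcard_leP; apply/injfunPex.
by exists f => // x y _ _; exact: fi.
Qed.

Lemma infinite_inj (T : pointedType) (A : set T) : infinite_set A ->
  exists f : nat -> T, (forall n, A (f n)) /\ injective f.
Proof.
move=> /infiniteP /pcard_leP /injfunPex [f Af fi]; exists f; split.
  by move=> n; apply: Af.
by move=> x y; apply: fi; rewrite in_setT.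
Qed.

Lemma part2 (T : pointedType) (F : set (set T)) :
  infinite_set [set: T] -> countable F ->
  exists2 A, infinite_set A & forall U, F U -> ~ splits U A.
Proof.
move=> Tinf /countable_injP [g ginj].
have [Un HUn] : exists Un : nat -> set T, forall U, F U -> Un (g U) = U.
  have /choice [Un HU] : forall n, exists V : set T,
      forall U, F U -> g U = n -> V = U.
    move=> n; have [[U [FU gU]]|nU] := pselect (exists U, F U /\ g U = n).
      exists U => U' FU' gU'; apply: ginj; rewrite ?inE //; congruence.
    by exists setT => U FU gU; exfalso; apply: nU; exists U.
  by exists Un => U FU; apply: HU.
have /choice [step Hstep] : forall WU : set T * set T, exists W',
    W' `<=` WU.1 /\ (W' `<=` WU.2 \/ W' `&` WU.2 = set0) /\
    (infinite_set WU.1 -> infinite_set W').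
  move=> [W U] /=; have [Hf|Hi] := pselect (finite_set (W `&` U)); last first.
    exists (W `&` U); split; first exact: subIsetl.
    by split; [left; exact: subIsetr|].
  exists (W `\` U); split; first by move=> x [].
  split.
    right; apply/seteqP; split=> [x [[_ nUx] Ux]|x //]; exact: nUx Ux.
  move=> Winf Dfin; apply: Winf.
  apply: (sub_finite_set (B := (W `&` U) `|` (W `\` U))).
    by move=> x Wx; have [Ux|nUx] := pselect (U x); [left|right].
  by rewrite finite_setU.
pose W := fix W n := if n is m.+1 then step (W m, Un m) else setT.
have Winf : forall n, infinite_set (W n).
  elim=> [//|n IH] /=; exact: (Hstep (W n, Un n)).2.2.
have Wdec : forall k m, W (m + k) `<=` W m.
  elim=> [m|k IH m]; first by rewrite addn0.
  rewrite addnS /=; apply: subset_trans (IH m).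
  exact: (Hstep (W (m + k), Un (m + k))).1.
have Wdec2 : forall n, W n.+1 `<=` Un n \/ W n.+1 `&` Un n = set0.
  move=> n; exact: (Hstep (W n, Un n)).2.1.
have /choice [pk Hpk] : forall S : set T, exists x, S !=set0 -> S x.
  move=> S; have [[x Sx]|n0] := pselect (S !=set0).
    by exists x.
  by exists point.
pose h := fix h n := if n is m.+1 then h m `|` [set pk (W m `\` h m)] else set0.
pose a n := pk (W n `\` h n).
have hfin : forall n, finite_set (h n).
  elim=> [|n IH] /=; first exact: finite_set0.
  by rewrite finite_setU; split => //; exact: finite_set1.
have ha : forall n, W n (a n) /\ ~ h n (a n).
  move=> n; apply: (Hpk (W n `\` h n)).
  exact: infinite_setN0 (infinite_setD (Winf n) (hfin n)).
have hmono : forall k m, h m `<=` h (m + k).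
  elim=> [m|k IH m]; first by rewrite addn0.
  rewrite addnS /=; apply: subset_trans (IH m) _; by move=> x hx; left.
have a_in_h : forall m n, (m < n)%N -> h n (a m).
  move=> m n lt; rewrite -(subnKC lt); apply: hmono => /=; by right.
have ainj : injective a.
  move=> m n e; case: (ltngtP m n) => // lt; exfalso.
    by apply: (ha n).2; rewrite -e; apply: a_in_h.
  by apply: (ha m).2; rewrite e; apply: a_in_h.
exists (range a); first by apply: (@inj_infinite _ _ a) => // n; exists n.
move=> U FU [sI sD].
set n := g U.
have key : forall k, h n.+1 (a k) \/ W n.+1 (a k).
  move=> k; case: (leqP k n) => [le|lt].
    by left; apply: a_in_h; rewrite ltnS.
  right; have := Wdec (k - n.+1) n.+1; rewrite subnKC //; apply; exact: (ha k).1.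
have := Wdec2 n; rewrite HUn // => -[WU|WU].
  apply: sD; apply: (sub_finite_set _ (hfin n.+1)).
  move=> x [[k _ <-] nU]; have [//|Wk] := key k; exfalso; exact: nU (WU _ Wk).
apply: sI; apply: (sub_finite_set _ (hfin n.+1)).
move=> x [[k _ <-] Uk]; have [//|Wk] := key k; exfalso.
have : (W n.+1 `&` U) (a k) by [].
by rewrite WU.
Qed.

Lemma part1 (A : set cantor_space) : infinite_set A ->
  exists2 U, open U & splits U A.
Proof.
move=> Ainf.
have [//|nosplit] := pselect (exists2 U : set cantor_space, open U & splits U A).
exfalso.
have H : forall U, open U -> finite_set (A `&` U) \/ finite_set (A `\` U).
  move=> U oU; have [f1|i1] := pselect (finite_set (A `&` U)); first by left.
  have [f2|i2] := pselect (finite_set (A `\` U)); first by right.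
  by exfalso; apply: nosplit; exists U.
pose P := [set p | A p /\ exists2 V, open V & V p /\ finite_set (A `&` V)].
have claim : forall p q, A p -> A q -> ~ P p -> ~ P q -> p = q.
  move=> p q Ap Aq nPp nPq; apply: contrapT => /eqP pq.
  have := cantor_space_hausdorff; rewrite open_hausdorff => /(_ p q pq).
  move=> [[V1 V2] /= [pV1 qV2] [oV1 oV2 /eqP dis]].
  rewrite inE in pV1; rewrite inE in qV2.
  have [f1|f1] := H V1 oV1; first by apply: nPp; split => //; exists V1.
  have [f2|f2] := H V2 oV2; first by apply: nPq; split => //; exists V2.
  apply: Ainf; apply: (sub_finite_set (B := (A `\` V1) `|` (A `\` V2))).
    move=> x Ax; have [x1|x1] := pselect (V1 x); last by left.
    right; split => // x2.
    have : (V1 `&` V2) x by [].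
    by rewrite dis.
  by rewrite finite_setU.
have Pinf : infinite_set P.
  move=> Pfin; apply: Ainf.
  apply: (sub_finite_set (B := P `|` (A `\` P))).
    by move=> x Ax; have [Px|nPx] := pselect (P x); [left|right].
  rewrite finite_setU; split => //.
  have [[p0 [Ap0 nPp0]]|emp] := pselect (exists p, A p /\ ~ P p).
    apply: (sub_finite_set _ (finite_set1 p0)).
    by move=> x [Ax nPx]; apply: claim.
  apply: (sub_finite_set _ (@finite_set0 cantor_space)).
  by move=> x [Ax nPx]; apply: emp; exists x.
have [s [Ps sinj]] := @infinite_inj _ _ Pinf.
have /choice [V HV] : forall n, exists V : set cantor_space,
    open V /\ V (s n) /\ finite_set (A `&` V).
  move=> n; have [_ [V oV [Vs fV]]] := Ps n; by exists V.
pose Wk k := V (k.*2) `&` ~` ((A `&` V (k.*2)) `\` [set (s (k.*2))]).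
have cl : forall B : set cantor_space, finite_set B -> closed B.
  move=> B fB; have := hausdorff_accessible cantor_space_hausdorff.
  by move=> /accessible_finite_set_closed; apply.
apply: nosplit; exists (\bigcup_k Wk k).
  apply: bigcup_open => k _; apply: openI; first exact: (HV (k.*2)).1.
  rewrite openC; apply: cl; apply: finite_setD; exact: (HV (k.*2)).2.2.
split.
  apply: (sub_infinite_set (A := range (fun k => s (k.*2)))).
    move=> x [k _ <-]; split; first exact: (Ps _).1.
    exists k => //; split; first exact: (HV (k.*2)).2.1.
    by move=> [_ /(_ erefl)].
  apply: (@inj_infinite _ _ (fun k => s (k.*2))); first by move=> k; exists k.
  by move=> x y /sinj /double_inj.
apply: (sub_infinite_set (A := range (fun k => s (k.*2.+1)))).
  move=> x [k _ <-]; split; first exact: (Ps _).1.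
  move=> [j _ [Vj nrem]]; apply: nrem; split; first split => //.
    exact: (Ps _).1.
  move=> /sinj /(congr1 odd); by rewrite /= !odd_double.
apply: (@inj_infinite _ _ (fun k => s (k.*2.+1))); first by move=> k; exists k.
by move=> x y /sinj [] /double_inj.
Qed.

Theorem lemma2p4 :
  (exists F : set (set cantor_space), splitting_open_family F) /\
  (forall F : set (set cantor_space), splitting_open_family F -> ~ countable F).
Proof.
split.
  by exists open; split => // A Ainf; apply: part1.
move=> F [_ Hs] Fc.
have Tinf : infinite_set [set: cantor_space].
  apply: (@inj_infinite _ _ (fun n : nat => (fun m : nat => m == n) : cantor_space)) => //.
  move=> x y e; have := congr1 (fun g : cantor_space => g x) e.
  by rewrite /= eqxx => /esym /eqP.
have [A Ainf HA] := @part2 cantor_space F Tinf Fc.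
have [U FU sp] := Hs A Ainf.
exact: HA U FU sp.
Qed.
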